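(* For every nonnegative integer $n$, $$\sum_{k=0}^{\infty}(-1)^k(4k+1)\,\frac{(-n)_k^2\,(\tfrac12)_k}{k!\,(n+\tfrac32)_k^2}=\left(\frac14\right)^n\frac{(\tfrac32)_n^2}{(\tfrac54)_n(\tfrac34)_n}.$$ (The sum is finite, since $(-n)_k=0$ for $k>n$.)
   Context: $(a)_j=\Gamma(a+j)/\Gamma(a)=a(a+1)\cdots(a+j-1)$ denotes the rising factorial (Pochhammer symbol), with $(a)_0=1$. *)

(* Defs.v *)
From HB Require Import structures.
From mathcomp Require Import all_boot all_order all_algebra.
Set Implicit Arguments. Unset Strict Implicit. Unset Printing Implicit Defensive.
Import Order.TTheory GRing.Theory Num.Theory.
Local Open Scope ring_scope.

Definition poch {R : pzRingType} (a : R) (j : nat) : R :=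
  \prod_(i < j) (a + i%:R).

(* Main.v *)
Require Import Defs.
From Stdlib Require Import Ring_theory Field_theory Ring Field.
From HB Require Import structures.
From mathcomp Require Import all_boot all_order all_algebra.
Import Order.TTheory GRing.Theory Num.Theory.
Local Open Scope ring_scope.

Definition RADD (x y : rat) : rat := x + y.
Definition RMUL (x y : rat) : rat := x * y.
Definition ROPP (x : rat) : rat := - x.
Definition RINV (x : rat) : rat := x^-1.
Definition RZERO : rat := 0.
Definition RONE : rat := 1.
Definition RNAT (n : nat) : rat := n%:R.
Definition RSGN (n : nat) : rat := (-1) ^+ n.

Lemma rat_field : field_theory RZERO RONE RADD RMUL (fun x y => RADD x (ROPP y)) ROPP
  (fun x y => RMUL x (RINV y)) RINV eq.
Proof.
split=> //.
  split=> //; rewrite /RADD /RMUL /ROPP /RZERO /RONE.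
  exact: add0r. exact: addrC. exact: addrA. exact: mul1r. exact: mulrC. exact: mulrA.
  exact: mulrDl. exact: subrr.
by move=> x Hx; rewrite /RMUL /RINV mulVf //; apply/eqP.
Qed.
Add Field ratF : rat_field.

Lemma E_add (x y : rat) : x + y = RADD x y. Proof. by []. Qed.
Lemma E_mul (x y : rat) : x * y = RMUL x y. Proof. by []. Qed.
Lemma E_opp (x : rat) : - x = ROPP x. Proof. by []. Qed.
Lemma E_inv (x : rat) : x^-1 = RINV x. Proof. by []. Qed.
Lemma E_sgn (n : nat) : (-1) ^+ n = RSGN n :> rat. Proof. by []. Qed.
Lemma E_nat (n : nat) : n%:R = RNAT n :> rat. Proof. by []. Qed.
Lemma E_exp (x : rat) n : x ^+ n.+1 = x * x ^+ n. Proof. exact: exprS. Qed.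
Lemma E_exp0 (x : rat) : x ^+ 0 = 1. Proof. exact: expr0. Qed.
Lemma E_one : 1 = RONE :> rat. Proof. by []. Qed.
Lemma E_zero : 0 = RZERO :> rat. Proof. by []. Qed.
Lemma RNAT_S n : RNAT n.+1 = RADD RONE (RNAT n). Proof. by rewrite /RNAT mulrS. Qed.
Lemma RNAT_0 : RNAT 0 = RZERO. Proof. by []. Qed.

Lemma RSGN0 : RSGN 0 = RONE. Proof. by []. Qed.
Lemma RSGN_S n : RSGN n.+1 = ROPP (RSGN n). Proof. by rewrite /RSGN /ROPP exprS mulN1r. Qed.

Ltac rprep := rewrite ?E_sgn ?RSGN_S ?RSGN0 ?E_exp ?E_exp0 ?E_nat ?E_inv ?E_mul ?E_opp ?E_add ?E_one ?E_zero ?RNAT_S ?RNAT_0;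
  match goal with |- @eq _ ?a ?b => change (@eq rat a b) end.
Ltac runf := rewrite /RADD /RMUL /ROPP /RINV /RZERO /RONE /RNAT /RSGN.

Lemma pD1 (x y : rat) : 0 < x -> 0 <= y -> 0 < x + y.
Proof. by move=> hx hy; rewrite addrC; apply: ltr_wpDl. Qed.
Lemma pD2 (x y : rat) : 0 <= x -> 0 < y -> 0 < x + y.
Proof. by move=> hx hy; apply: ltr_wpDl. Qed.

Ltac nn := first [ done | exact: ler0n | apply: addr_ge0; nn | apply: mulr_ge0; nn | rewrite invr_ge0; nn ].
Ltac pos := first [ done | apply: pD1; [pos|nn] | apply: pD2; [nn|pos] | apply: mulr_gt0; pos | rewrite invr_gt0; pos ].
Ltac side := runf; repeat split; try (apply/eqP; apply: lt0r_neq0; pos; done).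
Lemma poch0 (a : rat) : poch a 0 = 1.
Proof. by rewrite /poch big_ord0. Qed.
Lemma pochSr (a : rat) j : poch a j.+1 = poch a j * (a + j%:R).
Proof. by rewrite /poch big_ord_recr. Qed.
Lemma pochSl (a : rat) j : poch a j.+1 = a * poch (a + 1) j.
Proof.
rewrite /poch big_ord_recl /= addr0; congr (_ * _); apply: eq_bigr => i _.
by rewrite mulrS addrA.
Qed.
Lemma poch_zero n k : (n < k)%N -> poch (- n%:R : rat) k = 0.
Proof. by move=> hk; rewrite /poch (bigD1 (Ordinal hk)) //= addNr mul0r. Qed.
Lemma poch_gt0 (a : rat) j : 0 < a -> 0 < poch a j.
Proof. move=> ha; apply: prodr_gt0 => i _; apply: pD1 => //; exact: ler0n. Qed.

Definition f (n k : nat) : rat := (-1) ^+ k * (4 * k%:R + 1) *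
       (poch (- n%:R) k ^+ 2 * poch (1 / 2) k /
        (k`!%:R * poch (n%:R + 3 / 2) k ^+ 2)).
Definition c (n : nat) : rat := (2 * n%:R + 3) ^+ 2 / ((4 * n%:R + 5) * (4 * n%:R + 3)).
Definition s (n k : nat) : rat := 2 * k%:R ^+ 2 - k%:R - 2 * (n%:R + 1) * (3 * n%:R + 2).
Definition T (n k : nat) : rat := match k with 0 => 0 | j.+1 =>
  c n * ((-1) ^+ k * poch (- n%:R) j ^+ 2 * poch (1 / 2) k * s n k /
        (j`!%:R * poch (n%:R + 3 / 2) k ^+ 2)) end.

Lemma f_zero n k : (n < k)%N -> f n k = 0.
Proof. by move=> hk; rewrite /f poch_zero // expr0n /= !mul0r mulr0. Qed.

Lemma hN n : - (n.+1)%:R + 1 = - n%:R :> rat.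
Proof. rprep. ring. Qed.
Lemma hP n : (n.+1)%:R + 3 / 2 = n%:R + 3 / 2 + 1 :> rat.
Proof. rprep. ring. Qed.

Lemma step n k : f n.+1 k = c n * f n k + (T n k.+1 - T n k).
Proof.
case: k => [|j].
  rewrite /f /T /c /s !pochSr !poch0 fact0 /=.
  rprep. field. side.
rewrite /f /T.
rewrite (pochSl (- (n.+1)%:R)) hN hP.
have h5 : poch (n%:R + 3/2 + 1) j.+1 = poch (n%:R + 3/2) j.+2 / (n%:R + 3/2) :> rat.
  rewrite (pochSl (n%:R + 3/2) j.+1) mulrAC divff ?mul1r //; apply: lt0r_neq0; pos.
rewrite h5 (pochSr (- n%:R) j) (pochSr (1/2) j.+1) (pochSr (1/2) j).
rewrite (pochSr (n%:R + 3/2) j.+1) (pochSr (n%:R + 3/2) j) !factS !natrM /c /s.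
have hu : 0 < poch (n%:R + 3/2 : rat) j by apply: poch_gt0; pos.
have hF : 0 < (j`!)%:R :> rat by rewrite ltr0n fact_gt0.
move: (poch (- n%:R) j) (poch (1/2) j) hu hF.
move: (poch (n%:R + 3/2) j) (j`!%:R : rat) => u F hu hF a q.
rprep. field. side.
Qed.

Definition R (n : nat) : rat := (1 / 4) ^+ n * (poch (3 / 2) n ^+ 2 / (poch (5 / 4) n * poch (3 / 4) n)).

Lemma Rrec n : R n.+1 = c n * R n.
Proof.
rewrite /R /c !pochSr exprS.
have h5 : 0 < poch (5/4 : rat) n by apply: poch_gt0; pos.
have h3 : 0 < poch (3/4 : rat) n by apply: poch_gt0; pos.
move: (poch (5/4 : rat) n) (poch (3/4 : rat) n) h5 h3 => P5 P3 h5 h3.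
move: (poch (3/2 : rat) n) ((1/4 : rat) ^+ n) => P Q.
rprep. field. side.
Qed.

Lemma sum_f n : \sum_(k < n.+1) f n k = R n.
Proof.
elim: n => [|n IH].
  rewrite big_ord_recr big_ord0 /f /R /= !poch0 fact0.
  rprep. field. side.
rewrite (eq_bigr (fun k : 'I_n.+2 => c n * f n k + (T n k.+1 - T n k))); last by move=> i _; exact: step.
rewrite big_split /= -mulr_sumr big_ord_recr /= f_zero // addr0 IH.
rewrite -(big_mkord xpredT (fun k => T n k.+1 - T n k)) telescope_sumr //.
have -> : T n n.+2 = 0 by rewrite /T poch_zero // expr0n /= !mulr0 !mul0r mulr0.
by rewrite subrr addr0 Rrec.
Qed.

Theorem theorem1 (n m : nat) (hm : (n < m)%N) :
  \sum_(k < m)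
      ((-1) ^+ k * (4 * k%:R + 1) *
       (poch (- n%:R) k ^+ 2 * poch (1 / 2) k /
        (k`!%:R * poch (n%:R + 3 / 2) k ^+ 2)) : rat)
  = (1 / 4) ^+ n * (poch (3 / 2) n ^+ 2 / (poch (5 / 4) n * poch (3 / 4) n)).
Proof.
transitivity (\sum_(k < m) f n k); first by apply: eq_bigr.
rewrite -(subnKC hm) big_split_ord /= [X in _ + X]big1 ?addr0; first exact: sum_f.
move=> i _; apply: f_zero => /=; exact: leq_addr.
Qed.
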